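(* Let $\lambda_1,\lambda_2\in P^+$. Then $a^{\lambda_1+\lambda_2}_{\lambda_1,\lambda_2}=1$, and $a^{\tau}_{\lambda_1,\lambda_2}=0$ for every $\tau\in P^+$ with $\tau\not\le\lambda_1+\lambda_2$.
   Context: Let $\mathfrak{sl}_n=\mathfrak n^+\oplus\mathfrak h\oplus\mathfrak n^-$ with simple roots $\alpha_1,\dots,\alpha_{n-1}$, $R^+$ the positive roots, $P^+$ the dominant integral weights, $V(\tau)$ the simple module of highest weight $\tau$; for $\alpha\in R^+$ fix an $\mathfrak{sl}_2$-triple $e_\alpha,f_\alpha,h_\alpha$ with $f_\alpha\in\mathfrak g_{-\alpha}$. The partial order is $\tau\le\mu$ iff $\mu-\tau\in\sum_i\mathbb Z_{\ge0}\alpha_i$. The current algebra $\mathfrak{sl}_n\otimes\mathbb C[t]$ has bracket $[x\otimes p,y\otimes q]=[x,y]\otimes pq$. For $\lambda_1,\lambda_2\in P^+$ with $\lambda=\lambda_1+\lambda_2$, $F_{\lambda_1,\lambda_2}$ is the $\mathfrak{sl}_n\otimes\mathbb C[t]$-module generated by $\mathbb 1$ subject to $(\mathfrak n^+\otimes\mathbb C[t]).\mathbb 1=0$, $(\mathfrak h\otimes t\mathbb C[t]).\mathbb 1=0$, $(\mathfrak n^-\otimes t^2\mathbb C[t]).\mathbb 1=0$, $(h\otimes1).\mathbb 1=\lambda(h)\mathbb 1$ ($h\in\mathfrak h$), and for all $\alpha\in R^+$: $(f_\alpha\otimes1)^{\lambda(h_\alpha)+1}.\mathbb 1=0$, $(f_\alpha\otimes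 t)^{\min\{\lambda_1(h_\alpha),\lambda_2(h_\alpha)\}+1}.\mathbb 1=0$. It is a finite-dimensional $\mathfrak{sl}_n$-module and $a^\tau_{\lambda_1,\lambda_2}:=\dim\operatorname{Hom}_{\mathfrak{sl}_n}(F_{\lambda_1,\lambda_2},V(\tau))$. *)

(* Defs.v *)
From HB Require Import structures.
From mathcomp Require Import all_boot all_order all_algebra.
Set Implicit Arguments. Unset Strict Implicit. Unset Printing Implicit Defensive.
Import Order.TTheory GRing.Theory Num.Theory.
Local Open Scope ring_scope.

(* Conventions.  sl_n = trace-zero n x n matrices over K (an algebraically
   closed field of characteristic 0, e.g. C).  The current algebra
   sl_n (x) K[t] is identified with trace-zero n x n matrices over {poly K}
   (x (x) p  <->  p *: map_mx polyC x); its bracket is the commutator.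
   Positive roots: alpha = eps_i - eps_j, i < j;  e_alpha = E_ij,
   f_alpha = E_ji, h_alpha = E_ii - E_jj.  Simple roots: j = i+1.
   Cartan subalgebra h = trace-zero diagonal matrices. *)

Section Defs.
Variable K : numClosedFieldType.
Variable n : nat.

Definition strict_upper (R : pzRingType) (X : 'M[R]_n) : Prop :=
  forall i j : 'I_n, ~~ (i < j)%N -> X i j = 0.
Definition strict_lower (R : pzRingType) (X : 'M[R]_n) : Prop :=
  forall i j : 'I_n, ~~ (j < i)%N -> X i j = 0.
Definition diagonal (R : pzRingType) (X : 'M[R]_n) : Prop :=
  forall i j : 'I_n, i != j -> X i j = 0.

Definition cartan (h : 'M[K]_n) : Prop := diagonal h /\ \tr h = 0.

(* A dominant integral weight is represented by mu : 'I_n -> nat,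
   nonincreasing; it is the functional h |-> sum_i mu_i h_ii on the Cartan
   subalgebra, so that lambda(h_alpha) = mu_i - mu_j for alpha = eps_i-eps_j.
   Every element of P^+ arises this way. *)
Definition dominant (mu : 'I_n -> nat) : Prop :=
  forall i j : 'I_n, (i <= j)%N -> (mu j <= mu i)%N.

Definition wt_ev (mu : 'I_n -> nat) (h : 'M[K]_n) : K :=
  \sum_(i < n) (mu i)%:R * h i i.

Definition wt_add (mu1 mu2 : 'I_n -> nat) : 'I_n -> nat :=
  fun i => (mu1 i + mu2 i)%N.

(* tau <= mu  iff  mu - tau is a Z_{>=0}-combination of the simple roots
   alpha_i (h) = h_ii - h_(i+1)(i+1), as functionals on the Cartan. *)
Definition wt_le (tau mu : 'I_n -> nat) : Prop :=
  exists k : 'I_n -> nat, forall h : 'M[K]_n, cartan h ->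
    wt_ev mu h - wt_ev tau h =
    \sum_(i < n) \sum_(j < n | j == i.+1 :> nat) (k i)%:R * (h i i - h j j).

Definition coroot_val (mu : 'I_n -> nat) (i j : 'I_n) : nat := (mu i - mu j)%N.

Definition sl_rep (V : vectType K) (sigma : 'M[K]_n -> 'End(V)) : Prop :=
  (forall (a : K) x y, sigma (a *: x + y) = a *: sigma x + sigma y) /\
  (forall x y, \tr x = 0 -> \tr y = 0 -> forall u,
     sigma (x *m y - y *m x) u = sigma x (sigma y u) - sigma y (sigma x u)).

Definition cur_rep (M : vectType K) (rho : 'M[{poly K}]_n -> 'End(M)) : Prop :=
  (forall (a : K) X Y, rho (a%:P *: X + Y) = a *: rho X + rho Y) /\
  (forall X Y, \tr X = 0 -> \tr Y = 0 -> forall u,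
     rho (X *m Y - Y *m X) u = rho X (rho Y u) - rho Y (rho X u)).

Definition F_rel (mu1 mu2 : 'I_n -> nat) (M : vectType K)
    (rho : 'M[{poly K}]_n -> 'End(M)) (v : M) : Prop :=
  let mu := wt_add mu1 mu2 in
  (* (n^+ (x) K[t]) . v = 0 *)
  (forall X : 'M[{poly K}]_n, strict_upper X -> rho X v = 0) /\
  (* (h (x) t K[t]) . v = 0 *)
  (forall X : 'M[{poly K}]_n, diagonal X -> \tr X = 0 ->
     (forall i : 'I_n, (X i i)`_0 = 0) -> rho X v = 0) /\
  (* (n^- (x) t^2 K[t]) . v = 0 *)
  (forall X : 'M[{poly K}]_n, strict_lower X ->
     (forall (i j : 'I_n) (k : nat), (k < 2)%N -> (X i j)`_k = 0) ->
     rho X v = 0) /\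
  (* (h (x) 1) . v = lambda(h) v *)
  (forall h : 'M[K]_n, cartan h -> rho (map_mx polyC h) v = wt_ev mu h *: v) /\
  (* (f_alpha (x) 1)^(lambda(h_alpha)+1) . v = 0 *)
  (forall i j : 'I_n, (i < j)%N ->
     iter (coroot_val mu i j).+1 (rho (delta_mx j i)) v = 0) /\
  (* (f_alpha (x) t)^(min(lambda1(h_alpha),lambda2(h_alpha))+1) . v = 0 *)
  (forall i j : 'I_n, (i < j)%N ->
     iter (minn (coroot_val mu1 i j) (coroot_val mu2 i j)).+1
          (rho ('X *: delta_mx j i)) v = 0).

(* (M, rho, v) is (a copy of) F_{lambda1,lambda2}: M is a finite-dimensional
   module over the current algebra, generated by v, v satisfies the defining
   relations, and (M, v) is universal among finite-dimensional modules with a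
   vector satisfying the relations.  Since F_{lambda1,lambda2} is
   finite-dimensional, this characterises it up to isomorphism. *)
Definition is_F (mu1 mu2 : 'I_n -> nat) (M : vectType K)
    (rho : 'M[{poly K}]_n -> 'End(M)) (v : M) : Prop :=
  cur_rep rho /\ F_rel mu1 mu2 rho v /\
  (forall U : {vspace M}, v \in U ->
     (forall X, \tr X = 0 -> forall u, u \in U -> rho X u \in U) ->
     U = fullv) /\
  (forall (N : vectType K) (rhoN : 'M[{poly K}]_n -> 'End(N)) (w : N),
     cur_rep rhoN -> F_rel mu1 mu2 rhoN w ->
     exists f : 'Hom(M, N), f v = w /\
       forall X, \tr X = 0 -> forall u, f (rho X u) = rhoN X (f u)).

Definition simple_hw (tau : 'I_n -> nat) (V : vectType K)
    (sigma : 'M[K]_n -> 'End(V)) : Prop :=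
  sl_rep sigma /\ (fullv : {vspace V}) != 0%VS /\
  (forall U : {vspace V},
     (forall x, \tr x = 0 -> forall u, u \in U -> sigma x u \in U) ->
     U = 0%VS \/ U = fullv) /\
  exists w : V, w != 0 /\
    (forall x : 'M[K]_n, strict_upper x -> sigma x w = 0) /\
    (forall h : 'M[K]_n, cartan h -> sigma h w = wt_ev tau h *: w).

(* sl_n-module maps M -> V, M viewed as an sl_n-module by restriction to
   sl_n (x) 1. *)
Definition sl_hom (M V : vectType K) (rho : 'M[{poly K}]_n -> 'End(M))
    (sigma : 'M[K]_n -> 'End(V)) (f : 'Hom(M, V)) : Prop :=
  forall x : 'M[K]_n, \tr x = 0 -> forall u,
    f (rho (map_mx polyC x) u) = sigma x (f u).

Definition hom_dim_is (M V : vectType K) (rho : 'M[{poly K}]_n -> 'End(M))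
    (sigma : 'M[K]_n -> 'End(V)) (d : nat) : Prop :=
  exists U : {vspace 'Hom(M, V)},
    (forall f, f \in U <-> sl_hom rho sigma f) /\ \dim U = d.

End Defs.

(* Main.v *)
Require Import Defs.
From HB Require Import structures.
From mathcomp Require Import all_boot all_order all_algebra.
From Stdlib Require Import Classical.
From mathcomp Require Import ring zify.
From Stdlib Require List.
Set Implicit Arguments. Unset Strict Implicit. Unset Printing Implicit Defensive.
Import Order.TTheory GRing.Theory Num.Theory.
Local Open Scope ring_scope.

Section Sep.
Variable K : numClosedFieldType.

Lemma lfZ (U V : vectType K) (f : 'Hom(U, V)) c u : f (c *: u) = c *: f u.
Proof. exact: linearZ. Qed.
Lemma lfD (U V : vectType K) (f : 'Hom(U, V)) u w : f (u + w) = f u + f w.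
Proof. exact: linearD. Qed.
Lemma lfB (U V : vectType K) (f : 'Hom(U, V)) u w : f (u - w) = f u - f w.
Proof. exact: linearB. Qed.
Lemma lfN (U V : vectType K) (f : 'Hom(U, V)) u : f (- u) = - f u.
Proof. exact: linearN. Qed.
Lemma lf0 (U V : vectType K) (f : 'Hom(U, V)) : f 0 = 0.
Proof. exact: linear0. Qed.
Lemma lf_sum (U V : vectType K) (f : 'Hom(U, V)) I (r : seq I) (F : I -> U) :
  f (\sum_(i <- r) F i) = \sum_(i <- r) f (F i).
Proof. exact: linear_sum. Qed.

Lemma scl (V : vectType K) (a c : K) (y w : V) : a *: y - c *: (a *: w) = a *: (y - c *: w).
Proof. by rewrite scalerBr !scalerA mulrC. Qed.
Lemma scl2 (V : vectType K) (a c : K) (w : V) : c *: (a *: w) = a *: (c *: w).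
Proof. by rewrite !scalerA mulrC. Qed.

Lemma sum_wt (V : vectType K) (I : Type) (A : I -> 'End(V)) (ys : seq ((I -> K) * V)) a :
  (forall y, List.In y ys -> forall a, A a y.2 = y.1 a *: y.2) ->
  A a (\sum_(y <- ys) y.2) = \sum_(y <- ys) y.1 a *: y.2.
Proof.
elim: ys => [|y ys IH] H; first by rewrite !big_nil linear0.
rewrite !big_cons linearD; congr (_ + _); first exact: (H y (or_introl erefl) a).
by apply: IH => y' Hy'; apply: H; right.
Qed.

Lemma sepw (V : vectType K) (I : Type) (A : I -> 'End(V)) (tau : I -> K) (ys : seq ((I -> K) * V)) :
  forall x : V, (forall a, A a x = tau a *: x) ->
  (forall y, List.In y ys -> (forall a, A a y.2 = y.1 a *: y.2) /\
                            (y.2 = 0 \/ exists a, y.1 a != tau a)) ->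
  x = \sum_(y <- ys) y.2 -> x = 0.
Proof.
move: {2}(size ys) (leqnn (size ys)) => N; elim: N ys => [|N IHN] [|y ys] //=.
- by move=> _ x Hx Hys ->; rewrite big_nil.
- by move=> _ x Hx Hys ->; rewrite big_nil.
move=> Hsz x Hx Hys Hsum.
have Hsum0 := Hsum.
rewrite big_cons in Hsum.
have [Hy1 Hy2] := Hys y (or_introl erefl).
have Hrest : forall y', List.In y' ys -> (forall a, A a y'.2 = y'.1 a *: y'.2) /\
                            (y'.2 = 0 \/ exists a, y'.1 a != tau a).
  by move=> y' Hy'; apply: Hys; right.
case: Hy2 => [Hy0|[a Ha]].
  by apply: (IHN ys Hsz x Hx Hrest); rewrite Hsum Hy0 add0r.
pose ys' := map (fun y' : (I -> K) * V => (y'.1, (y'.1 a - y.1 a) *: y'.2)) ys.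
have Hx' : (tau a - y.1 a) *: x = \sum_(y' <- ys') y'.2.
  rewrite big_map scalerBl -Hx.
  have -> : y.1 a *: x = \sum_(y' <- y :: ys) y.1 a *: y'.2.
    by rewrite -scaler_sumr big_cons -Hsum.
  rewrite Hsum0 sum_wt; last by move=> y' Hy'; have [] := Hys y' Hy'.
  rewrite big_cons /=.
  rewrite big_cons opprD addrACA subrr add0r -sumrB; apply: eq_bigr => z _.
  by rewrite scalerBl.
have Hx0 : (tau a - y.1 a) *: x = 0.
  apply: (IHN ys' _ _ _ _ Hx'); first by rewrite size_map.
    by move=> b; rewrite lfZ Hx scalerA mulrC -scalerA.
  move=> y'; rewrite /ys' => /List.in_map_iff [z [<- Hz]] /=.
  have [Hz1 Hz2] := Hrest z Hz; split.
    by move=> b; rewrite lfZ Hz1 scalerA mulrC -scalerA.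
  by case: Hz2 => [->|[b Hb]]; [left; rewrite scaler0|right; exists b].
move/eqP: Hx0; rewrite scaler_eq0 subr_eq0 eq_sym (negbTE Ha) /=.
by move/eqP.
Qed.

Lemma In_mem (T : eqType) (x : T) (s : seq T) : List.In x s -> x \in s.
Proof. elim: s => //= y s IH [->|/IH]; rewrite inE ?eqxx // => ->; by rewrite orbT. Qed.

Lemma sl2 (V : vectType K) (E F H : 'End(V)) (w : V) (m : nat) :
  (forall u, E (F u) - F (E u) = H u) ->
  (forall u, H (F u) - F (H u) = - (F u *+ 2)) ->
  E w = 0 -> H w = m%:R *: w -> iter m.+1 F w = 0.
Proof.
move=> HEF HHF Ew Hw.
pose x k := iter k F w.
have Hx : forall k, H (x k) = (m%:R - (k.*2)%:R) *: x k.
  elim=> [|k IH]; first by rewrite subr0 Hw.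
  rewrite /x iterS -/(x k).
  have := HHF (x k); rewrite IH lfZ => /eqP; rewrite subr_eq => /eqP ->.
  rewrite -scaler_nat -scaleNr -scalerDl; congr (_ *: _).
  rewrite doubleS -addn2 -addnn !natrD; ring.
have Ex : forall k, E (x k.+1) = ((k.+1)%:R * (m%:R - k%:R)) *: x k.
  elim=> [|k IH].
    rewrite /x /= -/(x 0).
    have := HEF w; rewrite Ew lf0 subr0 => ->.
    by rewrite Hw mul1r subr0.
  rewrite /x iterS -/(x k.+1).
  have := HEF (x k.+1); move/eqP; rewrite subr_eq => /eqP ->.
  rewrite Hx IH lfZ /x iterS -/(x k) -scalerDl; congr (_ *: _).
  rewrite doubleS -addnn !mulrS natrD.
  ring.
case: (eqVneq w 0) => [w0|wn0].
  rewrite w0; elim: m.+1 => [|k IH] //=. by rewrite IH lf0.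
have [k0 Hk0] : exists k, x k == 0.
  pose D := \dim (fullv : {vspace V}).
  pose X := [tuple x i | i < D.+1].
  have nfree : ~~ free X.
    apply/negP => /eqP fX.
    have := dimvS (subvf <<X>>); rewrite fX size_tuple -/D.
    by rewrite ltnn.
  have : ~ (forall k : 'I_D.+1 -> K, \sum_(i < D.+1) k i *: X`_i = 0 -> forall i, k i = 0).
    by move=> H0; move/negP: nfree; apply; apply/freeP.
  move=> /not_all_ex_not [c Hc0]. have [Hc Hc1] := imply_to_and _ _ Hc0. have [i0 Hi0] := not_all_ex_not _ _ Hc1.
  exists i0; apply/eqP.
  have : c i0 *: x i0 = 0.
    apply: (@sepw V unit (fun _ => H) (fun _ => m%:R - (i0.*2)%:R)
      [seq ((fun _ => m%:R - ((val i).*2)%:R), - (c i *: x i)) | i <- enum 'I_D.+1 & i != i0]).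
    - by move=> _; rewrite lfZ Hx scalerA mulrC -scalerA.
    - move=> y /List.in_map_iff [i [<- /In_mem]]; rewrite mem_filter => /andP [ii0 _] /=.
      split; first by move=> _; rewrite lfN lfZ Hx scalerN scalerA mulrC -scalerA.
      right; exists tt; rewrite (inj_eq (addrI _)) (inj_eq oppr_inj) eqr_nat.
      by rewrite (inj_eq double_inj).
    - rewrite big_map big_filter sumrN.
      apply/eqP; rewrite -addr_eq0; apply/eqP.
      rewrite -[RHS]Hc (bigD1 i0) //= big_enum_cond.
      have hX : forall i : 'I_D.+1, X`_i = x i by move=> i; rewrite -(tnth_nth 0) tnth_mktuple.
      rewrite hX; congr (_ + _); apply: eq_bigr => i _; by rewrite hX.
  by move/eqP; rewrite scaler_eq0 (negbTE (introN eqP Hi0)) => /eqP.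
have exk : exists k, x k == 0 by exists k0.
case: (ex_minnP exk) => k /eqP xk kmin.
case: k xk kmin => [|k] xk kmin; first by move: wn0; rewrite -xk eqxx.
have xkn : x k != 0 by apply/negP => /kmin; rewrite ltnn.
have := Ex k; rewrite xk lf0 => /esym /eqP; rewrite scaler_eq0 (negbTE xkn) orbF.
rewrite mulf_eq0 pnatr_eq0 /= subr_eq0 eqr_nat => /eqP mk.
by rewrite -/(x m.+1) mk.
Qed.
End Sep.

Section Lie.
Variable K : numClosedFieldType.
Variable n : nat.
Local Notation PM := 'M[{poly K}]_n.
Local Notation trip := ('I_n * 'I_n * {poly K})%type.

Definition elem (t : trip) : PM := t.2 *: delta_mx t.1.2 t.1.1.
Definition valid (t : trip) := (t.1.1 < t.1.2)%N.

Lemma tr_elem t : valid t -> \tr (elem t) = 0.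
Proof.
rewrite /valid /elem => lt; rewrite mxtraceZ /mxtrace big1 ?mulr0 // => k _.
have ne : t.1.2 != t.1.1 by rewrite -val_eqE /= gtn_eqF.
rewrite !mxE; suff -> : ((k == t.1.2) && (k == t.1.1)) = false by [].
apply/negP => /andP [/eqP e1 /eqP e2].
by move: ne; rewrite -e1 -e2 eqxx.
Qed.

Lemma tr_comm (X Y : PM) : \tr (X *m Y - Y *m X) = 0.
Proof. by rewrite raddfB /= mxtrace_mulC subrr. Qed.

Lemma diag_mul_delta (D : PM) (a b : 'I_n) : diagonal D -> D *m delta_mx a b = D a a *: delta_mx a b.
Proof.
move=> HD; apply/matrixP => r c; rewrite !mxE (bigD1 a) //= big1 => [|k ka]; last first.
  by rewrite mxE (negbTE ka) mulr0.
rewrite [delta_mx a b a c]mxE eqxx /= addr0; case: (eqVneq r a) => [->|ra]; first by rewrite ?eqxx ?andbT.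
by rewrite (HD r a ra) !mul0r /= mulr0.
Qed.

Lemma delta_mul_diag (D : PM) (a b : 'I_n) : diagonal D -> delta_mx a b *m D = D b b *: delta_mx a b.
Proof.
move=> HD; apply/matrixP => r c; rewrite !mxE (bigD1 b) //= big1 => [|k kb]; last first.
  by rewrite mxE (negbTE kb) andbF mul0r.
rewrite [delta_mx a b r b]mxE eqxx andbT addr0; case: (eqVneq c b) => [->|cb]; first by rewrite ?andbT mulrC.
by rewrite eq_sym in cb; rewrite (HD b c cb) mulr0 /= ?andbF mulr0.
Qed.

Lemma tr_mapC (h : 'M[K]_n) : \tr (map_mx polyC h) = (\tr h)%:P.
Proof. exact: trace_map_mx. Qed.


Definition h0 : 'M[K]_n := \matrix_(i, j) (if i == j then (n.-1 - i)%:R - (i : nat)%:R else 0).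

Lemma h0_cartan : cartan h0.
Proof.
split; first by move=> i j ij; rewrite mxE (negbTE ij).
rewrite /mxtrace; under eq_bigr do rewrite mxE eqxx.
rewrite sumrB; apply/eqP; rewrite subr_eq0; apply/eqP.
rewrite (reindex_inj rev_ord_inj) /=; apply: eq_bigr => i _; congr (_%:R).
have := ltn_ord i; lia.
Qed.

Lemma h0_diff (a b : 'I_n) : (a < b)%N -> h0 a a - h0 b b = ((b - a).*2)%:R.
Proof.
move=> ab; rewrite !mxE !eqxx.
have an : (a <= n.-1)%N by have := ltn_ord a; lia.
have bn : (b <= n.-1)%N by have := ltn_ord b; lia.
rewrite !natrB // ?(ltnW ab) // -mul2n natrM natrB ?(ltnW ab) //; ring.
Qed.

Lemma h0_pos (s : seq trip) : all valid s -> s != [::] ->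
  \sum_(t <- s) (h0 t.1.1 t.1.1 - h0 t.1.2 t.1.2) != 0.
Proof.
move=> vs ns.
have -> : \sum_(t <- s) (h0 t.1.1 t.1.1 - h0 t.1.2 t.1.2) =
   (\sum_(t <- s) ((t.1.2 - t.1.1).*2))%:R.
  rewrite natr_sum big_seq [RHS]big_seq; apply: eq_bigr => t ts.
  by apply: h0_diff; move/allP: vs => /(_ t ts).
rewrite pnatr_eq0; case: s vs ns => [|t s] //= /andP [vt _] _.
rewrite big_cons -lt0n; move: vt; rewrite /valid; lia.
Qed.

Definition gd (h : 'M[K]_n) (k : nat) : K :=
  if (insub k : option 'I_n) is Some j then h j j else 0.

Lemma gd_ord h (i : 'I_n) : gd h i = h i i.
Proof. by rewrite /gd valK. Qed.

Lemma sum_pick (F : nat -> K) m :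
  \sum_(j < n | val j == m) F j = if (m < n)%N then F m else 0.
Proof.
case: ltnP => [mn|nm].
  rewrite (bigD1 (Ordinal mn)) //= big1 ?addr0 // => j /andP [/eqP jm jn].
  by case/eqP: jn; apply: val_inj.
by rewrite big1 // => j /eqP jm; move: (ltn_ord j); rewrite jm ltnNge nm.
Qed.

Lemma root_tel (h : 'M[K]_n) (a b : 'I_n) : (a < b)%N ->
  h a a - h b b = \sum_(i < n) \sum_(j < n | j == i.+1 :> nat)
                    ((a <= i)%N && (i < b)%N)%:R * (h i i - h j j).
Proof.
move=> ab.
have bn := ltn_ord b.
transitivity (\sum_(i < n) ((a <= i)%N && (i < b)%N)%:R * (gd h i - gd h i.+1)).
  pose F := fun i : nat => ((a <= i)%N && (i < b)%N)%:R * (gd h i - gd h i.+1).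
  rewrite -(big_mkord xpredT F).
  have an : (a <= n)%N by apply: ltnW; apply: ltn_trans ab bn.
  rewrite (@big_cat_nat _ _ _ a 0 n _ _ (leq0n a) an) (@big_cat_nat _ _ _ b a n _ _ (ltnW ab) (ltnW bn)) /=.
  have z1 : \sum_(0 <= i < a) F i = 0.
    rewrite big_nat_cond big1 // => i /andP [/andP [_ ia] _].
    by rewrite /F leqNgt ia mul0r.
  have z3 : \sum_(b <= i < n) F i = 0.
    rewrite big_nat_cond big1 // => i /andP [/andP [bi _] _].
    by rewrite /F ltnNge bi andbF mul0r.
  rewrite z1 z3 add0r addr0.
  rewrite (eq_big_nat _ _ (F2 := fun i => - (gd h i.+1 - gd h i))); last first.
    by move=> i /andP [ai ib]; rewrite /F ai ib mul1r opprB.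
  by rewrite sumrN telescope_sumr ?(ltnW ab) // opprB !gd_ord.
apply: eq_bigr => i _.
transitivity (\sum_(j < n | j == i.+1 :> nat)
                    ((a <= i)%N && (i < b)%N)%:R * (gd h i - gd h j)).
  rewrite (sum_pick (fun j => ((a <= i)%N && (i < b)%N)%:R * (gd h i - gd h j))).
  case: (ltnP i.+1 n) => // ni.
  have -> : ((a <= i)%N && (i < b)%N) = false by apply/negP => /andP [_ ib]; lia.
  by rewrite mul0r.
by apply: eq_bigr => j _; rewrite !gd_ord.
Qed.
Section Rep.
Variable M : vectType K.
Variable rho : PM -> 'End(M).
Hypothesis Hrep : cur_rep rho.

Lemma rhoD X Y : rho (X + Y) = rho X + rho Y.
Proof. by have := Hrep.1 1 X Y; rewrite polyC1 !scale1r. Qed.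
Lemma rho0 : rho 0 = 0.
Proof. by have h := rhoD 0 0; rewrite addr0 in h; apply: (addrI (rho 0)); rewrite -h addr0. Qed.
Lemma rhoZ a X : rho (a%:P *: X) = a *: rho X.
Proof. by have := Hrep.1 a X 0; rewrite addr0 rho0 addr0. Qed.
Lemma rhoN X : rho (- X) = - rho X.
Proof. by rewrite -scaleN1r -polyCN rhoZ scaleN1r. Qed.
Lemma rhoB X Y : rho (X - Y) = rho X - rho Y.
Proof. by rewrite rhoD rhoN. Qed.
Lemma rho_sum I (r : seq I) (P : pred I) (F : I -> PM) :
  rho (\sum_(i <- r | P i) F i) = \sum_(i <- r | P i) rho (F i).
Proof. exact: (big_morph rho rhoD rho0). Qed.
Lemma brk X Y u : \tr X = 0 -> \tr Y = 0 ->
  rho X (rho Y u) = rho (X *m Y - Y *m X) u + rho Y (rho X u).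
Proof. by move=> hx hy; rewrite (Hrep.2 X Y hx hy) subrK. Qed.

Variable v : M.
Definition mono (s : seq trip) : M := foldr (fun t u => rho (elem t) u) v s.
Definition inS (u : M) := exists ss : seq (K * seq trip),
  all (fun x => all valid x.2) ss /\ u = \sum_(x <- ss) x.1 *: mono x.2.

Lemma inS0 : inS 0.
Proof. by exists [::]; rewrite big_nil. Qed.
Lemma inSD u w : inS u -> inS w -> inS (u + w).
Proof.
move=> [s1 [h1 ->]] [s2 [h2 ->]]; exists (s1 ++ s2).
by rewrite all_cat h1 h2 big_cat.
Qed.
Lemma inSZ c u : inS u -> inS (c *: u).
Proof.
move=> [s1 [h1 ->]]; exists (map (fun x => (c * x.1, x.2)) s1); split.
  by rewrite all_map.
by rewrite big_map scaler_sumr; apply: eq_bigr => x _; rewrite scalerA.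
Qed.
Lemma inS_mono s : all valid s -> inS (mono s).
Proof. by move=> h; exists [:: (1, s)]; rewrite /= h big_seq1 scale1r. Qed.
Lemma inS_elem t u : valid t -> inS u -> inS (rho (elem t) u).
Proof.
move=> vt [s1 [h1 ->]]; exists (map (fun x => (x.1, t :: x.2)) s1); split.
  by rewrite all_map; apply: sub_all h1 => x /= ->; rewrite vt.
by rewrite big_map lf_sum; apply: eq_bigr => x _; rewrite lfZ.
Qed.
Lemma inS_sum I (r : seq I) (P : pred I) (F : I -> M) :
  (forall i, P i -> inS (F i)) -> inS (\sum_(i <- r | P i) F i).
Proof. by move=> h; apply: big_ind => //; [exact: inS0 | exact: inSD]. Qed.

Variable lam : 'M[K]_n -> K.
Hypothesis HU : forall X : PM, strict_upper X -> rho X v = 0.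
Hypothesis HD : forall X : PM, diagonal X -> \tr X = 0 ->
     (forall i : 'I_n, (X i i)`_0 = 0) -> rho X v = 0.
Hypothesis HC : forall h : 'M[K]_n, cartan h -> rho (map_mx polyC h) v = lam h *: v.

Definition wts (s : seq trip) (h : 'M[K]_n) :=
  lam h - \sum_(t <- s) (h t.1.1 t.1.1 - h t.1.2 t.1.2).

Lemma comm_H_elem (h : 'M[K]_n) t : diagonal h ->
  map_mx polyC h *m elem t - elem t *m map_mx polyC h
  = (h t.1.2 t.1.2 - h t.1.1 t.1.1)%:P *: elem t.
Proof.
move=> Dh.
have DH : diagonal (map_mx polyC h) by move=> i j ij; rewrite mxE (Dh i j ij).
rewrite /elem -scalemxAr -scalemxAl diag_mul_delta // delta_mul_diag //.
rewrite !mxE !scalerA -scalerBl; congr (_ *: _).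
by rewrite polyCB; ring.
Qed.

Lemma mono_wt h s : cartan h -> all valid s ->
  rho (map_mx polyC h) (mono s) = wts s h *: mono s.
Proof.
move=> ch; elim: s => [|t s IH] /=; first by rewrite HC // /wts big_nil subr0.
move=> /andP [vt vs].
have trH : \tr (map_mx polyC h) = 0 by rewrite tr_mapC ch.2.
rewrite brk // ?tr_elem // (comm_H_elem _ ch.1) rhoZ IH // lfZ scale_lfunE -scalerDl.
congr (_ *: _); rewrite /wts big_cons; ring.
Qed.

Lemma inS_base X : \tr X = 0 -> inS (rho X v).
Proof.
move=> trX.
pose Up : PM := \matrix_(i, j) (if (i < j)%N then X i j else 0).
pose Dg : PM := \matrix_(i, j) (if i == j then X i j else 0).
pose Lo : PM := \matrix_(i, j) (if (j < i)%N then X i j else 0).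
have eX : X = Up + Dg + Lo.
  apply/matrixP => r c; rewrite !mxE.
  case: (ltngtP r c) => [rc|cr|/val_inj rc].
  - have -> : (r == c) = false by apply/negP => /eqP e; move: rc; rewrite e ltnn.
    by rewrite !addr0.
  - have -> : (r == c) = false by apply/negP => /eqP e; move: cr; rewrite e ltnn.
    by rewrite !add0r.
  - by rewrite rc eqxx add0r addr0.
rewrite eX !rhoD !add_lfunE; apply: inSD; first apply: inSD.
- by rewrite HU; [exact: inS0 | move=> i j ij; rewrite mxE (negbTE ij)].
- have dDg : diagonal Dg by move=> i j ij; rewrite mxE (negbTE ij).
  have trDg : \tr Dg = 0.
    by rewrite -trX /mxtrace; apply: eq_bigr => i _; rewrite mxE eqxx.
  pose h := map_mx (fun p : {poly K} => p`_0) Dg.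
  have ch : cartan h.
    split; first by move=> i j ij; rewrite mxE (dDg i j ij) coef0.
    by rewrite /mxtrace; under eq_bigr do rewrite mxE; rewrite -coef_sum -/(\tr Dg) trDg coef0.
  have -> : Dg = map_mx polyC h + (Dg - map_mx polyC h) by rewrite addrC subrK.
  rewrite rhoD add_lfunE HC // HD ?addr0.
  + by apply: inSZ; exact: (inS_mono (s := [::])).
  + by move=> i j ij; rewrite !mxE (negbTE ij) coef0 polyC0 subr0.
  + by rewrite raddfB /= trDg tr_mapC ch.2 subrr.
  + by move=> i; rewrite !mxE coefB coefC eqxx subrr.
- rewrite [Lo]matrix_sum_delta rho_sum sum_lfunE; apply: inS_sum => r _.
  rewrite rho_sum sum_lfunE; apply: inS_sum => c _.
  rewrite mxE; case: ifP => cr; last by rewrite scale0r rho0 lfunE; exact: inS0.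
  have -> : X r c *: delta_mx r c = elem ((c, r), X r c) by [].
  by apply: (inS_mono (s := [:: ((c, r), X r c)])); rewrite /= /valid /= cr.
Qed.


Lemma inS_rho_mono s : all valid s -> forall X, \tr X = 0 -> inS (rho X (mono s)).
Proof.
elim: s => [|t s IH] /=; first by move=> _ X trX; exact: inS_base.
move=> /andP [vt vs] X trX.
rewrite brk ?tr_elem //; apply: inSD.
  by apply: IH => //; exact: tr_comm.
by apply: inS_elem => //; exact: IH.
Qed.

Lemma inS_rho X u : \tr X = 0 -> inS u -> inS (rho X u).
Proof.
move=> trX [ss [hs ->]]; rewrite lf_sum big_seq; apply: inS_sum => x xs.
rewrite lfZ; apply: inSZ; apply: inS_rho_mono => //.
by move/allP: hs => /(_ x xs).
Qed.

Lemma gen_step (U : {vspace M}) : (forall u, u \in U -> inS u) ->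
  ~ (forall X, \tr X = 0 -> forall u, u \in U -> rho X u \in U) ->
  exists U' : {vspace M}, (U <= U')%VS /\ (\dim U < \dim U')%N /\ (forall u, u \in U' -> inS u).
Proof.
move=> QU ncl.
have [X /not_all_ex_not [trX /not_all_ex_not [u ncl2]]] := not_all_ex_not _ _ ncl.
have [uU nXu] := imply_to_and _ _ ncl2.
pose U' := (U + <[rho X u]>)%VS.
have sUU' : (U <= U')%VS by exact: addvSl.
exists U'; split => //; split.
  rewrite ltn_neqAle (dimvS sUU') andbT (dimv_leqif_eq sUU').2; apply/negP => /eqP eU.
  apply: nXu; rewrite eU; apply: (subvP (addvSr U _)); exact: memv_line.
move=> y /memv_addP [a aU [b /vlineP [c ->] ->]].
apply: inSD; [exact: QU | apply: inSZ; apply: inS_rho => //; exact: QU].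
Qed.

Lemma gen_space : exists U : {vspace M}, v \in U /\
  (forall X, \tr X = 0 -> forall u, u \in U -> rho X u \in U) /\
  (forall u, u \in U -> inS u).
Proof.
have main : forall N (U : {vspace M}), (\dim (fullv : {vspace M}) - \dim U <= N)%N ->
    (forall u, u \in U -> inS u) -> v \in U ->
    exists U' : {vspace M}, v \in U' /\
      (forall X, \tr X = 0 -> forall u, u \in U' -> rho X u \in U') /\
      (forall u, u \in U' -> inS u).
  elim=> [|N IH] U hN QU vU;
    (case: (classic (forall X, \tr X = 0 -> forall u, u \in U -> rho X u \in U)) => [cl|ncl];
    first by exists U);
    have [U' [sUU' [ltd QU']]] := gen_step QU ncl;
    have le := dimvS (subvf U').
  - exfalso; move: hN; rewrite leqn0 subn_eq0 => hN.
    by have := leq_trans le hN; rewrite leqNgt ltd.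
  - apply: (IH U') => //; last by apply: (subvP sUU').
    by rewrite -ltnS; apply: leq_trans hN; rewrite ltn_sub2l // (leq_trans ltd le).
apply: (main _ <[v]>%VS (leqnn _)); last exact: memv_line.
move=> y /vlineP [c ->]; apply: inSZ; exact: (inS_mono (s := [::])).
Qed.
End Rep.

Lemma wle_of (mu tau : 'I_n -> nat) s : all valid s ->
  (forall h, cartan h -> wts (wt_ev mu) s h = wt_ev tau h) -> wt_le K tau mu.
Proof.
move=> vs H; exists (fun i => \sum_(t <- s) ((t.1.1 <= i)%N && (i < t.1.2)%N))%N.
move=> h ch; have := H h ch; rewrite /wts => e.
have -> : wt_ev mu h - wt_ev tau h = \sum_(t <- s) (h t.1.1 t.1.1 - h t.1.2 t.1.2).
  by rewrite -e opprB addrC subrK.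
rewrite big_seq; under eq_bigr => t ts do rewrite (root_tel h (allP vs t ts)).
rewrite -big_seq exchange_big; apply: eq_bigr => i _; rewrite exchange_big.
by apply: eq_bigr => j _; rewrite natr_sum mulr_suml.
Qed.

Definition ev0 (X : PM) : 'M[K]_n := map_mx (horner_eval 0) X.

Lemma ev0E X i j : ev0 X i j = (X i j)`_0.
Proof. by rewrite mxE horner_evalE horner_coef0. Qed.

Lemma ev0C (h : 'M[K]_n) : ev0 (map_mx polyC h) = h.
Proof. by apply/matrixP => i j; rewrite ev0E mxE coefC. Qed.

Lemma ev0_lin a X Y : ev0 (a%:P *: X + Y) = a *: ev0 X + ev0 Y.
Proof. by apply/matrixP => i j; rewrite !mxE !horner_evalE !horner_coef0 coefD coefCM. Qed.

Lemma ev0_comm X Y : ev0 (X *m Y - Y *m X) = ev0 X *m ev0 Y - ev0 Y *m ev0 X.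
Proof. by rewrite /ev0 map_mxB !map_mxM. Qed.

Lemma tr_ev0 X : \tr (ev0 X) = (\tr X)`_0.
Proof. by rewrite /ev0 trace_map_mx; exact: horner_coef0. Qed.

Section SRep.
Variable V : vectType K.
Variable sigma : 'M[K]_n -> 'End(V).
Hypothesis Hs : sl_rep sigma.

Definition rhoV (X : PM) : 'End(V) := sigma (ev0 X).

Lemma rhoV_rep : cur_rep rhoV.
Proof.
split; first by move=> a X Y; rewrite /rhoV ev0_lin Hs.1.
move=> X Y trX trY u; rewrite /rhoV ev0_comm Hs.2 // tr_ev0 ?trX ?trY coef0 //.
Qed.

Lemma rhoVC x : rhoV (map_mx polyC x) = sigma x.
Proof. by rewrite /rhoV ev0C. Qed.

Lemma sigma0 : sigma 0 = 0.
Proof.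
have h := Hs.1 1 0 0; rewrite !scale1r !addr0 in h.
by apply: (addrI (sigma 0)); rewrite -h addr0.
Qed.
End SRep.


Lemma tr_delta (R : pzSemiRingType) (a b : 'I_n) : \tr (delta_mx a b : 'M[R]_n) = (a == b)%:R.
Proof.
rewrite /mxtrace (bigD1 a) //= big1 ?addr0 => [|k ka]; first by rewrite mxE eqxx.
by rewrite mxE (negbTE ka).
Qed.

Lemma ev0_delta (a b : 'I_n) : ev0 (delta_mx a b) = delta_mx a b.
Proof. by apply/matrixP => r c; rewrite ev0E !mxE coefMn coef1 eqxx. Qed.

Definition halpha (i j : 'I_n) : 'M[K]_n := delta_mx i i - delta_mx j j.

Lemma halpha_cartan (i j : 'I_n) : cartan (halpha i j).
Proof.
split.
  move=> r c rc; rewrite !mxE.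
  have -> : (r == i) && (c == i) = false by apply/negP => /andP [/eqP e1 /eqP e2]; move: rc; rewrite e1 e2 eqxx.
  have -> : (r == j) && (c == j) = false by apply/negP => /andP [/eqP e1 /eqP e2]; move: rc; rewrite e1 e2 eqxx.
  by rewrite subrr.
by rewrite /halpha raddfB /= !tr_delta !eqxx subrr.
Qed.

Lemma wt_halpha (tau : 'I_n -> nat) (i j : 'I_n) :
  wt_ev tau (halpha i j) = (tau i)%:R - (tau j)%:R.
Proof.
have e : forall a : 'I_n, \sum_(k < n) (tau k)%:R * (a == k)%:R = (tau a)%:R :> K.
  move=> a; rewrite (bigD1 a) //= big1 ?addr0 ?eqxx ?mulr1 // => k ka.
  by rewrite eq_sym (negbTE ka) mulr0.
rewrite /wt_ev -(e i) -(e j) -sumrB; apply: eq_bigr => k _.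
by rewrite !mxE !andbb mulrBr [i == k]eq_sym [j == k]eq_sym.
Qed.

Section SimpleV.
Variable V : vectType K.
Variable sigma : 'M[K]_n -> 'End(V).
Hypothesis Hs : sl_rep sigma.
Hypothesis Hirr : forall U : {vspace V},
     (forall x, \tr x = 0 -> forall u, u \in U -> sigma x u \in U) ->
     U = 0%VS \/ U = fullv.
Variable tau : 'I_n -> nat.
Variable w : V.
Hypothesis wn0 : w != 0.
Hypothesis Hwu : forall x : 'M[K]_n, strict_upper x -> sigma x w = 0.
Hypothesis Hwc : forall h : 'M[K]_n, cartan h -> sigma h w = wt_ev tau h *: w.

Lemma V_HU (X : PM) : strict_upper X -> rhoV sigma X w = 0.
Proof. by move=> uX; apply: Hwu => i j ij; rewrite ev0E (uX i j ij) coef0. Qed.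

Lemma V_HD (X : PM) : diagonal X -> \tr X = 0 ->
     (forall i : 'I_n, (X i i)`_0 = 0) -> rhoV sigma X w = 0.
Proof.
move=> dX _ c0; rewrite /rhoV.
have -> : ev0 X = 0.
  apply/matrixP => i j; rewrite ev0E mxE; case: (eqVneq i j) => [->|ij]; first exact: c0.
  by rewrite (dX i j ij) coef0.
by rewrite (sigma0 Hs) zero_lfunE.
Qed.

Lemma V_HC (h : 'M[K]_n) : cartan h -> rhoV sigma (map_mx polyC h) w = wt_ev tau h *: w.
Proof. by move=> ch; rewrite rhoVC; exact: Hwc. Qed.

Lemma V_all (y : V) : inS (rhoV sigma) w y.
Proof.
have [U [wU [clU allU]]] := gen_space (rhoV_rep Hs) V_HU V_HD V_HC.
case: (Hirr (U := U)).
- move=> x trx u uU; rewrite -rhoVC; apply: clU => //.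
  by rewrite tr_mapC trx.
- by move=> U0; move: wU; rewrite U0 memv0 (negbTE wn0).
- by move=> Uf; apply: allU; rewrite Uf memvf.
Qed.

Lemma hw_unique (y : V) : (forall h, cartan h -> sigma h y = wt_ev tau h *: y) ->
  exists c, y = c *: w.
Proof.
move=> Hy; have [ss [vss ey]] := V_all y.
pose c := \sum_(x <- ss) (if x.2 == [::] then x.1 else 0).
exists c; apply/eqP; rewrite -subr_eq0; apply/eqP.
pose I := {h : 'M[K]_n | cartan h}.
pose ys := map (fun x : K * seq trip => ((fun a : I => wts (wt_ev tau) x.2 (sval a)),
            if x.2 == [::] then 0 else x.1 *: mono (rhoV sigma) w x.2)) ss.
apply: (@sepw K V I (fun a => sigma (sval a)) (fun a => wt_ev tau (sval a)) ys).
- move=> a; have ca := proj2_sig a; rewrite lfB lfZ Hy // Hwc //; exact: scl.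
- move=> y' /List.in_map_iff [x [<- /In_mem xs]] /=.
  have vx : all valid x.2 by move/allP: vss => /(_ x xs).
  split.
    move=> a; case: ifP => _; first by rewrite lf0 scaler0.
    have ca := proj2_sig a.
    rewrite lfZ -(@rhoVC V sigma (sval a)) (mono_wt (rhoV_rep Hs) V_HC) //.
    exact: scl2.
  case: ifP => nx; [by left | right].
  exists (exist _ h0 h0_cartan); rewrite /wts /= subr_eq addrC -subr_eq subrr eq_sym.
  by apply: h0_pos => //; rewrite nx.
- rewrite ey /ys big_map /c scaler_suml -sumrB; apply: eq_bigr => x _.
  rewrite /=; case: ifP => [/eqP e|_]; [by rewrite e subrr | by rewrite scale0r subr0].
Qed.

Lemma key (M : vectType K) (rho : PM -> 'End(M)) (Hrep : cur_rep rho) (v : M)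
  (lamM : 'M[K]_n -> K)
  (HCM : forall h, cartan h -> rho (map_mx polyC h) v = lamM h *: v)
  (Hall : forall u, inS rho v u) (g : 'Hom(M, V)) :
  sl_hom rho sigma g ->
  (forall s, all valid s -> g (mono rho v s) = 0 \/
      exists h, cartan h /\ wts lamM s h != wt_ev tau h) -> g = 0.
Proof.
move=> Hg Hcond; case: (eqVneq g 0) => [//|gn0]; exfalso.
have cl : forall x, \tr x = 0 -> forall u, u \in limg g -> sigma x u \in limg g.
  by move=> x trx u /memv_imgP [m _ ->]; rewrite -Hg //; exact: memv_img (memvf _).
case: (Hirr cl) => [L0|Lf].
  apply: (negP gn0); apply/eqP/lfunP => m; have := memv_img g (memvf m).
  by rewrite L0 memv0 => /eqP ->; rewrite zero_lfunE.
have : w \in limg g by rewrite Lf memvf.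
move/memv_imgP => [m _ wm].
have [ss [vss em]] := Hall m.
apply: (negP wn0); apply/eqP.
pose I := {h : 'M[K]_n | cartan h}.
apply: (@sepw K V I (fun a => sigma (sval a)) (fun a => wt_ev tau (sval a))
  (map (fun x : K * seq trip => ((fun a : I => wts lamM x.2 (sval a)), x.1 *: g (mono rho v x.2))) ss) w).
- by move=> a; exact: Hwc (proj2_sig a).
- move=> y' /List.in_map_iff [x [<- /In_mem xs]] /=.
  have vx : all valid x.2 by move/allP: vss => /(_ x xs).
  split.
    move=> a; have ca := proj2_sig a.
    rewrite lfZ -Hg ?ca.2 // (mono_wt Hrep HCM) // lfZ; exact: scl2.
  case: (Hcond _ vx) => [e|[h [ch hn]]]; first by left; rewrite e scaler0.
  by right; exists (exist _ h ch).
- by rewrite wm em lf_sum big_map; apply: eq_bigr => x _; rewrite lfZ.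
Qed.

Lemma V_iter (i j : 'I_n) : (i < j)%N -> (tau j <= tau i)%N ->
  iter (tau i - tau j).+1 (rhoV sigma (delta_mx j i)) w = 0.
Proof.
move=> ij tji.
have ne : i != j by rewrite -val_eqE /= ltn_eqF.
have trij : \tr (delta_mx i j : PM) = 0 by rewrite tr_delta (negbTE ne).
have trji : \tr (delta_mx j i : PM) = 0 by rewrite tr_delta eq_sym (negbTE ne).
have trH : \tr (delta_mx i i - delta_mx j j : PM) = 0.
  by rewrite raddfB /= !tr_delta !eqxx subrr.
have Hr := rhoV_rep Hs.
apply: (sl2 (E := rhoV sigma (delta_mx i j)) (H := rhoV sigma (delta_mx i i - delta_mx j j))).
- by move=> u; rewrite (brk Hr) // !mul_delta_mx addrK.
- move=> u; rewrite (brk Hr) // addrK.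
  have -> : (delta_mx i i - delta_mx j j) *m delta_mx j i - delta_mx j i *m (delta_mx i i - delta_mx j j)
      = - (delta_mx j i *+ 2) :> PM.
    rewrite mulmxBl !mulmxBr !mul_delta_mx_cond !eqxx (negbTE ne).
    by rewrite !mulr0n !mulr1n sub0r subr0 mulr2n opprD.
  by rewrite (rhoN Hr) mulr2n (rhoD Hr) opp_lfunE add_lfunE mulr2n.
- apply: V_HU => r c nrc; rewrite mxE.
  have -> : (r == i) && (c == j) = false => //.
  by apply/negP => /andP [/eqP e1 /eqP e2]; move: nrc; rewrite e1 e2 ij.
- rewrite /rhoV /ev0 map_mxB -/(ev0 _) -/(ev0 _) !ev0_delta.
  rewrite (Hwc (halpha_cartan i j)) wt_halpha natrB //.
Qed.
End SimpleV.
End Lie.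

Theorem corollary3p3 (K : numClosedFieldType) (n : nat) (hn : (1 < n)%N)
    (mu1 mu2 : 'I_n -> nat) (d1 : dominant mu1) (d2 : dominant mu2)
    (M : vectType K) (rho : 'M[{poly K}]_n -> 'End(M)) (v : M) :
  is_F mu1 mu2 rho v ->
  (forall (V : vectType K) (sigma : 'M[K]_n -> 'End(V)),
     simple_hw (wt_add mu1 mu2) sigma -> hom_dim_is rho sigma 1) /\
  (forall tau : 'I_n -> nat, dominant tau -> ~ wt_le K tau (wt_add mu1 mu2) ->
     forall (V : vectType K) (sigma : 'M[K]_n -> 'End(V)),
       simple_hw tau sigma -> hom_dim_is rho sigma 0).
Proof.
move=> [Hrep [Hrel [Hgen Huniv]]].
move: Hrel; rewrite /F_rel /= => [[HU [HD [HL2 [HC [H5 H6]]]]]].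
pose lam : 'M[K]_n -> K := wt_ev (wt_add mu1 mu2).
have Hall : forall u, inS rho v u.
  have [U [vU [clU allU]]] := gen_space Hrep HU HD HC.
  by move=> u; apply: allU; rewrite (Hgen U vU clU) memvf.
split.
- move=> V sigma [Hs [_ [Hirr [w [wn0 [Hwu Hwc]]]]]].
  have FV : F_rel mu1 mu2 (rhoV sigma) w.
    rewrite /F_rel /=; split; first exact: V_HU.
    split; first exact: V_HD.
    split.
      move=> X lX c0; rewrite /rhoV.
      have -> : ev0 X = 0.
        by apply/matrixP => i j; rewrite ev0E mxE c0.
      by rewrite (sigma0 Hs) zero_lfunE.
    split; first exact: V_HC.
    split.
      move=> i j ij; rewrite /coroot_val; apply: V_iter => //.
      by rewrite /wt_add leq_add // ?d1 ?d2 // ltnW.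
    move=> i j ij; rewrite /rhoV.
    have -> : ev0 ('X *: delta_mx j i : 'M[{poly K}]_n) = 0 :> 'M[K]_n.
      by apply/matrixP => r c; rewrite ev0E !mxE coefXM.
    by rewrite (sigma0 Hs) zero_lfunE.
  have [f0 [f0v Hf0]] := Huniv V (rhoV sigma) w (rhoV_rep Hs) FV.
  have sf0 : sl_hom rho sigma f0.
    by move=> x trx u; rewrite Hf0 ?rhoVC // tr_mapC trx.
  have f0n0 : f0 != 0.
    by apply/eqP => e; move: wn0; rewrite -f0v e zero_lfunE eqxx.
  exists <[f0]>%VS; split; last by rewrite dim_vline f0n0.
  move=> f; split.
    move/vlineP => [c ->] x trx u.
    by rewrite !scale_lfunE sf0 // lfZ.
  move=> Hf; apply/vlineP.
  have [c fv] : exists c, f v = c *: w.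
    apply: (hw_unique Hs Hirr wn0 Hwu Hwc) => h ch.
    by rewrite -Hf ?ch.2 // HC // lfZ.
  exists c; apply/eqP; rewrite -subr_eq0; apply/eqP.
  apply: (key Hirr wn0 Hwc Hrep HC Hall).
    move=> x trx u.
    by rewrite !add_lfunE !opp_lfunE !scale_lfunE Hf // sf0 // lfB lfZ.
  case=> [|t s] vs.
    by left; rewrite /= add_lfunE opp_lfunE scale_lfunE fv f0v subrr.
  right; exists (h0 K n); split; first exact: h0_cartan.
  by rewrite /wts subr_eq addrC -subr_eq subrr eq_sym; apply: h0_pos.
- move=> tau dtau nle V sigma [Hs [_ [Hirr [w [wn0 [Hwu Hwc]]]]]].
  exists 0%VS; split; last by rewrite dimv0.
  move=> f; rewrite memv0; split.
    by move/eqP => -> x trx u; rewrite !zero_lfunE lf0.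
  move=> Hf; apply/eqP; apply: (key Hirr wn0 Hwc Hrep HC Hall Hf).
  move=> s vs; right.
  case: (classic (exists h : 'M[K]_n, cartan h /\ wts lam s h != wt_ev tau h)) => // nex.
  exfalso; apply: nle; apply: (wle_of vs) => h ch.
  apply/eqP; apply/negPn/negP => hne; apply: nex; exists h; split => //.
Qed.
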